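(* (a) The cell $S_{s_1,s_1}$ is the disjoint union of exactly two $G$-orbits of points $(P,Ps_1,Ps_1n)$: $n=n(1,0,0)$, dimension $5$, stabilizer $\left\{\begin{pmatrix}a&0&y\\0&a&z\\0&0&1/a^2\end{pmatrix}:a\in\mathbb{R}^\times,y,z\in\mathbb{R}\right\}$; $n=n(0,0,0)$, dimension $4$, stabilizer $\left\{\begin{pmatrix}a&0&y\\0&b&z\\0&0&1/(ab)\end{pmatrix}:a,b\in\mathbb{R}^\times,y,z\in\mathbb{R}\right\}$. (b) The cell $S_{s_1,s_2}$ is a single $G$-orbit, that of $(P,Ps_1,Ps_2)$, of dimension $5$ with stabilizer $\left\{\begin{pmatrix}a&0&y\\0&b&0\\0&0&1/(ab)\end{pmatrix}:a,b\in\mathbb{R}^\times,y\in\mathbb{R}\right\}$. (c) The cell $S_{s_1,1}$ is a single $G$-orbit, that of $(P,Ps_1,P)$, of dimension $4$ with stabilizer $\left\{\begin{pmatrix}a&0&y\\0&b&z\\0&0&1/(ab)\end{pmatrix}:a,b\in\mathbb{R}^\times,y,z\in\mathbb{R}\right\}$. (d) The cell $S_{s_2,s_2}$ is the disjoint union of exactly two $G$-orbits of points $(P,Ps_2,Ps_2n)$: $n=n(0,0,1)$, dimension $5$, stabilizer $\left\{\begin{pmatrix}1/a^2&x&y\\0&a&0\\0&0&a\end{pmatrix}:a\in\mathbb{R}^\times,x,y\in\mathbb{R}\right\}$; $n=n(0,0,0)$, dimension $4$, stabilizer $\left\{\begin{pmatrix}a&x&y\\0&b&0\\0&0&1/(ab)\end{pmatrix}:a,b\in\mathbb{R}^\times,x,y\in\mathbb{R}\right\}$.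 (e) The cell $S_{s_2,1}$ is a single $G$-orbit, that of $(P,Ps_2,P)$, of dimension $4$ with stabilizer $\left\{\begin{pmatrix}a&x&y\\0&b&0\\0&0&1/(ab)\end{pmatrix}:a,b\in\mathbb{R}^\times,x,y\in\mathbb{R}\right\}$. (f) The cell $S_{1,1}$ is a single $G$-orbit of dimension $3$ with stabilizer $P$.
   Context: $G=\mathrm{SL}_3(\mathbb{R})$, $P$ the upper triangular matrices in $G$; $G$ acts on $X=(P\backslash G)^3$ by right multiplication in each coordinate. $n(x,y,z)=\begin{pmatrix}1&x&y\\0&1&z\\0&0&1\end{pmatrix}$. $1$ is the identity matrix, $s_1=\begin{pmatrix}0&1&0\\1&0&0\\0&0&-1\end{pmatrix}$, $s_2=\begin{pmatrix}-1&0&0\\0&0&1\\0&1&0\end{pmatrix}$. $S_{v,w}=\big(\{P\}\times P\backslash PvP\times P\backslash PwP\big)\cdot G$. The stabilizer of $(P,Pv,Pwn)$ is $P\cap v^{-1}Pv\cap (wn)^{-1}P(wn)$. *)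

(* Defs.v *)
From HB Require Import structures.
From mathcomp Require Import all_boot all_order all_algebra.
From mathcomp Require Import classical_sets boolp reals topology normedtype sequences.
From mathcomp Require Import Rstruct Rstruct_topology.
Set Implicit Arguments. Unset Strict Implicit. Unset Printing Implicit Defensive.
Import Order.TTheory GRing.Theory Num.Theory.
Local Open Scope classical_set_scope.
Local Open Scope ring_scope.

Notation RR := Rdefinitions.R.
Notation M3 := 'M[RR]_3.

Definition mx3 (a11 a12 a13 a21 a22 a23 a31 a32 a33 : RR) : M3 :=
  \matrix_(i < 3, j < 3)
    nth 0 (nth [::] [:: [:: a11; a12; a13]; [:: a21; a22; a23]; [:: a31; a32; a33]] i) j.

Definition inG (g : M3) : Prop := \det g = 1.
Definition inP (p : M3) : Prop := inG p /\ forall i j : 'I_3, (nat_of_ord j < nat_of_ord i)%N -> p i j = 0.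

Definition nmx (x y z : RR) : M3 := mx3 1 x y 0 1 z 0 0 1.
Definition s1 : M3 := mx3 0 1 0 1 0 0 0 0 (-1).
Definition s2 : M3 := mx3 (-1) 0 0 0 0 1 0 1 0.

(* Right cosets: P g = P h  iff  h = p g for some p in P *)
Definition coset_eq (g h : M3) : Prop := exists p, inP p /\ h = p *m g.

(* A point of X = (P\G)^3 is represented by a triple of elements of G. *)
Definition triple := (M3 * M3 * M3)%type.
Definition inGt (x : triple) : Prop := [/\ inG x.1.1, inG x.1.2 & inG x.2].
Definition xeq (x y : triple) : Prop :=
  [/\ coset_eq x.1.1 y.1.1, coset_eq x.1.2 y.1.2 & coset_eq x.2 y.2].
Definition xact (x : triple) (g : M3) : triple := (x.1.1 *m g, x.1.2 *m g, x.2 *m g).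

Definition Gorbit (x : triple) : set triple :=
  [set y | inGt y /\ exists g, inG g /\ xeq y (xact x g)].

(* the cell S_{v,w} = ({P} x P\PvP x P\PwP) . G *)
Definition cell (v w : M3) : set triple :=
  [set y | inGt y /\ exists g p q, [/\ inG g, inP p, inP q &
        xeq y (xact (1%:M, v *m p, w *m q) g)]].

Definition stab (x : triple) : set M3 := [set g | inG g /\ xeq (xact x g) x].

Definition mexp (A : M3) : M3 :=
  \matrix_(i < 3, j < 3)
    limn (fun N : nat => (\sum_(k < N) (k`!%:R)^-1 *: A ^+ k) i j).

Definition lie_alg (H : set M3) : set M3 := [set A | forall t : RR, H (mexp (t *: A))].

Definition has_dim (L : set M3) (d : nat) : Prop :=
  (exists s : seq M3, [/\ size s = d, free s & forall A, A \in s -> L A]) /\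
  ~ (exists s : seq M3, [/\ size s = d.+1, free s & forall A, A \in s -> L A]).

(* the orbit G.x (= G / Stab x) has dimension d = dim G - dim Stab x, dim G = 8 *)
Definition orbit_dim (x : triple) (d : nat) : Prop :=
  (d <= 8)%N /\ has_dim (lie_alg (stab x)) (8 - d).

(* Main.v *)
Require Import Defs.
From HB Require Import structures.
From mathcomp Require Import all_boot all_order all_algebra.
From mathcomp Require Import classical_sets boolp reals topology normedtype sequences exp.
From mathcomp Require Import Rstruct Rstruct_topology.
From mathcomp Require Import ring lra.
Import Order.TTheory GRing.Theory Num.Theory.
Import numFieldNormedType.Exports.
Local Open Scope classical_set_scope.
Local Open Scope ring_scope.


Lemma mx3E (M : M3) : M = mx3 (M 0 0) (M 0 1) (M 0 2%:R) (M 1 0) (M 1 1) (M 1 2%:R) (M 2%:R 0) (M 2%:R 1) (M 2%:R 2%:R).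
Proof.
apply/matrixP => i j; rewrite mxE.
case: i => [[|[|[|i]]] Hi] //; case: j => [[|[|[|j]]] Hj] //=; by congr (M _ _); apply: val_inj.
Qed.

Lemma mx3P a11 a12 a13 a21 a22 a23 a31 a32 a33 b11 b12 b13 b21 b22 b23 b31 b32 b33 :
  a11 = b11 -> a12 = b12 -> a13 = b13 -> a21 = b21 -> a22 = b22 -> a23 = b23 ->
  a31 = b31 -> a32 = b32 -> a33 = b33 ->
  mx3 a11 a12 a13 a21 a22 a23 a31 a32 a33 = mx3 b11 b12 b13 b21 b22 b23 b31 b32 b33.
Proof. by move=> *; subst. Qed.

Lemma mulmx3 a11 a12 a13 a21 a22 a23 a31 a32 a33 b11 b12 b13 b21 b22 b23 b31 b32 b33 :
  mx3 a11 a12 a13 a21 a22 a23 a31 a32 a33 *m mx3 b11 b12 b13 b21 b22 b23 b31 b32 b33 =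
  mx3 (a11*b11 + a12*b21 + a13*b31) (a11*b12 + a12*b22 + a13*b32) (a11*b13 + a12*b23 + a13*b33)
      (a21*b11 + a22*b21 + a23*b31) (a21*b12 + a22*b22 + a23*b32) (a21*b13 + a22*b23 + a23*b33)
      (a31*b11 + a32*b21 + a33*b31) (a31*b12 + a32*b22 + a33*b32) (a31*b13 + a32*b23 + a33*b33).
Proof.
apply/matrixP => i j; rewrite !mxE !big_ord_recr big_ord0 /= !mxE /=.
case: i => [[|[|[|i]]] Hi] //; case: j => [[|[|[|j]]] Hj] //=; rewrite add0r //.
Qed.

Lemma det2 (B : 'M[RR]_2) : \det B = B 0 0 * B 1 1 - B 0 1 * B 1 0.
Proof.
rewrite (expand_det_row _ 0) !big_ord_recr big_ord0 /= add0r /cofactor !det_mx11 !mxE /=.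
have e1 : widen_ord (m:=2) (leqnSn 1) ord_max = 0 by apply: val_inj.
have e2 : lift (0 : 'I_2) 0 = 1 by apply: val_inj.
have e3 : lift (ord_max : 'I_2) 0 = 0 by apply: val_inj.
have e4 : (ord_max : 'I_2) = 1 by apply: val_inj.
rewrite e1 e2 e3 e4 expr0 expr1; ring.
Qed.

Lemma det3 a11 a12 a13 a21 a22 a23 a31 a32 a33 :
  \det (mx3 a11 a12 a13 a21 a22 a23 a31 a32 a33) =
  a11*(a22*a33 - a23*a32) - a12*(a21*a33 - a23*a31) + a13*(a21*a32 - a22*a31).
Proof.
rewrite (expand_det_row _ 0) !big_ord_recr big_ord0 /= add0r.
rewrite /cofactor !det2 !mxE /= expr0 expr1 -signr_odd /= expr0; ring.
Qed.

Lemma scale3 t a11 a12 a13 a21 a22 a23 a31 a32 a33 :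
  t *: mx3 a11 a12 a13 a21 a22 a23 a31 a32 a33 = mx3 (t*a11) (t*a12) (t*a13) (t*a21) (t*a22) (t*a23) (t*a31) (t*a32) (t*a33).
Proof.
apply/matrixP => i j; rewrite !mxE.
by case: i => [[|[|[|i]]] Hi] //; case: j => [[|[|[|j]]] Hj] //=; rewrite mulr0.
Qed.

Lemma add3 a11 a12 a13 a21 a22 a23 a31 a32 a33 b11 b12 b13 b21 b22 b23 b31 b32 b33 :
  mx3 a11 a12 a13 a21 a22 a23 a31 a32 a33 + mx3 b11 b12 b13 b21 b22 b23 b31 b32 b33 =
  mx3 (a11+b11) (a12+b12) (a13+b13) (a21+b21) (a22+b22) (a23+b23) (a31+b31) (a32+b32) (a33+b33).
Proof.
apply/matrixP => i j; rewrite !mxE.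
by case: i => [[|[|[|i]]] Hi] //; case: j => [[|[|[|j]]] Hj] //=; rewrite addr0.
Qed.

Lemma one3 : (1%:M : M3) = mx3 1 0 0 0 1 0 0 0 1.
Proof.
apply/matrixP => i j; rewrite !mxE.
by case: i => [[|[|[|i]]] Hi] //; case: j => [[|[|[|j]]] Hj] //=.
Qed.


Lemma inP_mx3 a b c d e f g h i :
  inP (mx3 a b c d e f g h i) <-> [/\ d = 0, g = 0, h = 0 & a * e * i = 1].
Proof.
split.
  case=> dt lo.
  have hd := lo 1 0 isT; have hg := lo 2%:R 0 isT; have hh := lo 2%:R 1 isT.
  rewrite !mxE /= in hd hg hh; split => //.
  by move: dt; rewrite /inG det3 hd hg hh => <-; ring.
case=> -> -> -> H; split; first by rewrite /inG det3 -H; ring.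
move=> [[|[|[|x]]] Hx] // [[|[|[|y]]] Hy] //= _; by rewrite mxE.
Qed.

Lemma inP_form p : inP p -> exists a b c d e f, a * d * f = 1 /\ p = mx3 a b c 0 d e 0 0 f.
Proof.
move=> Hp; rewrite (mx3E p) in Hp *.
case/inP_mx3: Hp => -> -> -> H.
by do 6 eexists; split; first exact: H.
Qed.

Lemma inG_unit g : inG g -> g \in unitmx.
Proof. by rewrite /inG unitmxE => ->; rewrite unitr1. Qed.

Lemma inG_mul g h : inG g -> inG h -> inG (g *m h).
Proof. by rewrite /inG det_mulmx => -> ->; rewrite mulr1. Qed.

Lemma inG_inv g : inG g -> inG (invmx g).
Proof. by rewrite /inG det_inv => ->; rewrite invr1. Qed.

Lemma inP_G p : inP p -> inG p.
Proof. by case. Qed.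

Lemma inv_uniq (A B : M3) : B *m A = 1%:M -> invmx A = B.
Proof.
move=> H; have [uB uA] := mulmx1_unit H.
by rewrite -[RHS](mulmxK uA) H mul1mx.
Qed.

Lemma invmxM' (A B : M3) : A \in unitmx -> B \in unitmx -> invmx (A *m B) = invmx B *m invmx A.
Proof.
move=> uA uB; apply: inv_uniq.
by rewrite mulmxA -(mulmxA (invmx B)) mulVmx // mulmx1 mulVmx.
Qed.

Lemma inv3 a b c d e f : a * d * f = 1 ->
  invmx (mx3 a b c 0 d e 0 0 f) = mx3 (d*f) (-b*f) (b*e - c*d) 0 (a*f) (-a*e) 0 0 (a*d).
Proof.
move=> H; apply: inv_uniq; rewrite mulmx3 one3; apply: mx3P;
  rewrite -?H; ring.
Qed.

Lemma inP_mul p q : inP p -> inP q -> inP (p *m q).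
Proof.
move=> /inP_form [a [b [c [d [e [f [H ->]]]]]]] /inP_form [a' [b' [c' [d' [e' [f' [H' ->]]]]]]].
rewrite mulmx3; apply/inP_mx3; split; try ring.
rewrite (_ : _ * _ * _ = (a * d * f) * (a' * d' * f')); first by rewrite H H' mulr1.
ring.
Qed.

Lemma inP_inv p : inP p -> inP (invmx p).
Proof.
move=> /inP_form [a [b [c [d [e [f [H ->]]]]]]].
rewrite inv3 //; apply/inP_mx3; split => //.
rewrite (_ : _ * _ * _ = (a * d * f) * (a * d * f)); first by rewrite H mulr1.
ring.
Qed.

Lemma inP1 : inP 1%:M.
Proof. by rewrite one3; apply/inP_mx3; split => //; rewrite !mulr1. Qed.

Lemma coset_refl g : coset_eq g g.
Proof. by exists 1%:M; split; [exact: inP1 | rewrite mul1mx]. Qed.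

Lemma coset_trans a b c : coset_eq a b -> coset_eq b c -> coset_eq a c.
Proof.
move=> [p [Hp ->]] [q [Hq ->]]; exists (q *m p); split; first exact: inP_mul.
by rewrite mulmxA.
Qed.

Lemma coset_sym a b : coset_eq a b -> coset_eq b a.
Proof.
move=> [p [Hp ->]]; exists (invmx p); split; first exact: inP_inv.
rewrite mulmxA mulVmx ?mul1mx //; apply: inG_unit; exact: inP_G.
Qed.

Lemma coset_mulr a b k : coset_eq a b -> coset_eq (a *m k) (b *m k).
Proof. by move=> [p [Hp ->]]; exists p; split => //; rewrite mulmxA. Qed.

Lemma coset_iff a b : inG a -> (coset_eq a b <-> inP (b *m invmx a)).
Proof.
move=> Ga; split.
  by move=> [p [Hp ->]]; rewrite mulmxK // inG_unit.
by move=> H; exists (b *m invmx a); split => //; rewrite mulmxKV // inG_unit.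
Qed.

Lemma xeq_trans a b c : xeq a b -> xeq b c -> xeq a c.
Proof. by case=> h1 h2 h3 [k1 k2 k3]; split; apply: coset_trans; eauto. Qed.

Lemma xeq_sym a b : xeq a b -> xeq b a.
Proof. by case=> h1 h2 h3; split; apply: coset_sym. Qed.

Lemma xeq_act a b g : xeq a b -> xeq (xact a g) (xact b g).
Proof. by case=> h1 h2 h3; split; apply: coset_mulr. Qed.

Lemma xact_comp x g h : xact (xact x g) h = xact x (g *m h).
Proof. by case: x => [[a b] c]; rewrite /xact /= !mulmxA. Qed.

Lemma xact_inv x g : inG g -> xact (xact x g) (invmx g) = x.
Proof.
move=> Gg; case: x => [[a b] c]; rewrite /xact /= -!mulmxA mulmxV ?inG_unit //.
by rewrite !mulmx1.
Qed.
Arguments inG_unit {g}.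
Arguments inP_G {p}.
Arguments inG_mul {g h}.
Arguments inG_inv {g}.
Arguments inP_mul {p q}.
Arguments inP_inv {p}.
Arguments coset_iff {a} b.
Arguments xeq_trans {a b c}.
Arguments xeq_sym {a b}.
Arguments xeq_act {a b} g.
Arguments coset_trans {a b c}.
Arguments coset_sym {a b}.
Arguments coset_mulr {a b} k.


Lemma coset_comm a b : coset_eq a b <-> coset_eq b a.
Proof. by split; apply: coset_sym. Qed.

Lemma stab_iff v w g : inG v -> inG w ->
  stab (1%:M, v, w) g <-> [/\ inG g, inP g, inP (v *m g *m invmx v) & inP (w *m g *m invmx w)].
Proof.
move=> Gv Gw; rewrite /stab /xeq /xact /=.
have G1' : inG 1%:M by rewrite /inG det1.
split.
  case=> Gg [h1 h2 h3]; split => //.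
  - by move/coset_sym: h1; move/(coset_iff _ G1'); rewrite invmx1 mulmx1 mul1mx.
  - by move/coset_sym: h2; move/(coset_iff _ Gv).
  - by move/coset_sym: h3; move/(coset_iff _ Gw).
case=> Gg h1 h2 h3; split => //; split; apply: coset_sym.
- by apply/(coset_iff _ G1'); rewrite invmx1 mulmx1 mul1mx.
- by apply/(coset_iff _ Gv).
- by apply/(coset_iff _ Gw).
Qed.

Lemma cell_sub v w (X : set triple) : inG v -> inG w ->
  (forall u, inP u -> exists n h, [/\ Gorbit (1%:M, v, w *m n) `<=` X, inP h,
       inP (v *m h *m invmx v) & inP (w *m n *m h *m u *m invmx w)]) ->
  cell v w `<=` X.
Proof.
move=> Gv Gw Hu y [Gy [g [p [q [Gg Pp Pq Hy]]]]].
have Pu : inP (p *m invmx q) by apply: inP_mul => //; exact: inP_inv.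
have [n [h [sub Ph Pvh Pw]]] := Hu _ Pu.
have Gq := inG_unit (inP_G Pq).
have Gw' := inG_unit Gw; have Gv' := inG_unit Gv.
apply: sub; split => //; exists (h *m p *m g); split.
  by apply: inG_mul => //; apply: inG_mul; exact: inP_G.
apply: (xeq_trans Hy); rewrite -xact_comp; apply: xeq_act; split => /=.
- exists (h *m p); split; first exact: inP_mul.
  by rewrite mul1mx mulmx1.
- exists (v *m h *m invmx v); split => //.
  by rewrite [RHS]mulmxA mulmxKV // mulmxA.
- exists (w *m n *m h *m (p *m invmx q) *m invmx w); split => //.
  by rewrite !mulmxA mulmxKV // mulmxKV.
Qed.

Lemma orbit_sub_cell v w q : inP q -> Gorbit (1%:M, v, w *m q) `<=` cell v w.
Proof.
move=> Pq y [Gy [g [Gg H]]]; split => //; exists g, 1%:M, q; split => //; first exact: inP1.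
by rewrite mulmx1.
Qed.

Lemma orbit_disj x y : (forall k, inG k -> ~ xeq x (xact y k)) -> Gorbit x `&` Gorbit y = set0.
Proof.
move=> H; apply/seteqP; split => // z [[Gz [g [Gg Hx]]] [_ [h [Gh Hy]]]].
have := xeq_act (invmx g) (xeq_trans (xeq_sym Hx) Hy).
rewrite xact_inv // xact_comp; apply: H; apply: inG_mul => //; exact: inG_inv.
Qed.

Lemma Gs1 : inG s1. Proof. by rewrite /inG /s1 det3; ring. Qed.
Lemma Gs2 : inG s2. Proof. by rewrite /inG /s2 det3; ring. Qed.
Lemma G1 : inG 1%:M. Proof. by rewrite /inG det1. Qed.
Lemma invs1 : invmx s1 = s1.
Proof. by apply: inv_uniq; rewrite /s1 mulmx3 one3; apply: mx3P; ring. Qed.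
Lemma invs2 : invmx s2 = s2.
Proof. by apply: inv_uniq; rewrite /s2 mulmx3 one3; apply: mx3P; ring. Qed.
Lemma Pn x y z : inP (nmx x y z).
Proof. by rewrite /nmx; apply/inP_mx3; split => //; ring. Qed.
Lemma invn x y z : invmx (nmx x y z) = nmx (-x) (x*z - y) (-z).
Proof. by rewrite /nmx inv3 ?mulr1 //; apply: mx3P; ring. Qed.


Lemma inP_form2 p : inP p -> exists a b c d e, [/\ a != 0, d != 0 & p = mx3 a b c 0 d e 0 0 (a * d)^-1].
Proof.
move=> /inP_form [a [b [c [d [e [f [H ->]]]]]]].
have a0 : a != 0 by apply/eqP => a0; move: H; rewrite a0 !mul0r => /eqP; rewrite eq_sym oner_eq0.
have d0 : d != 0 by apply/eqP => d0; move: H; rewrite d0 mulr0 mul0r => /eqP; rewrite eq_sym oner_eq0.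
exists a, b, c, d, e; split => //; apply: mx3P => //.
by rewrite -[RHS]mulr1 -H mulrA mulVf ?mul1r // mulf_neq0.
Qed.

Lemma invs1n x y z : invmx (s1 *m nmx x y z) = nmx (-x) (x*z - y) (-z) *m s1.
Proof. rewrite invmxM' ?invs1 ?invn //; apply: inG_unit; [exact: Gs1|exact: (inP_G (Pn x y z))]. Qed.
Lemma invs2n x y z : invmx (s2 *m nmx x y z) = nmx (-x) (x*z - y) (-z) *m s2.
Proof. rewrite invmxM' ?invs2 ?invn //; apply: inG_unit; [exact: Gs2|exact: (inP_G (Pn x y z))]. Qed.

Ltac crunch := rewrite ?invs1 ?invs2 ?invs1n ?invs2n ?invn ?invmx1 /s1 /s2 /nmx ?one3 !mulmx3.

Ltac simp0 := rewrite ?(mul0r,mulr0,mul1r,mulr1,add0r,addr0,oppr0,subr0,sub0r,mulN1r,mulrN1,opprK).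
Ltac fld := field; by repeat (apply/andP; split).
Ltac pcheck := crunch; apply/inP_mx3; split; simp0; try ring; try fld.

Lemma a_disj : Gorbit (1%:M, s1, s1 *m nmx 1 0 0) `&` Gorbit (1%:M, s1, s1 *m nmx 0 0 0) = set0.
Proof.
apply: orbit_disj => k Gk [h1 h2 h3]; move: h1 h2 h3; rewrite /xact /= => h1 h2 h3.
move: h1 => /(coset_iff _ G1); rewrite invmx1 mulmx1 mul1mx => /inP_form2 [a [b [c [d [e [a0 d0 kE]]]]]]; subst k.
move: h2 => /(coset_iff _ Gs1). crunch. case/inP_mx3 => e1 _ _ _.
move: h3 => /(coset_iff _ (inG_mul Gs1 (inP_G (Pn _ _ _)))). crunch. case/inP_mx3 => f1 _ _ _.
move: e1 f1; simp0 => -> /eqP; rewrite addr0 oppr_eq0 (negbTE a0) //.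
Qed.

Lemma a_cell : cell s1 s1 = Gorbit (1%:M, s1, s1 *m nmx 1 0 0) `|` Gorbit (1%:M, s1, s1 *m nmx 0 0 0).
Proof.
apply/seteqP; split; last first.
  by move=> z [] Hz; apply: (orbit_sub_cell _ _ _ (Pn _ _ _) _ Hz).
apply: cell_sub Gs1 Gs1 _ => u /inP_form2 [a [b [c [d [e [a0 d0 ->]]]]]].
have [b0|b0] := eqVneq b 0.
  subst b; exists (nmx 0 0 0), 1%:M; split; first by move=> z Hz; right.
  - exact: inP1.
  - pcheck.
  - pcheck.
exists (nmx 1 0 0), (mx3 d 0 0 0 (-b) 0 0 0 (- (b*d)^-1)); split; first by move=> z Hz; left.
- by apply/inP_mx3; split => //; fld.
- pcheck.
- pcheck.
Qed.

Lemma Gs1n x y z : inG (s1 *m nmx x y z).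
Proof. exact: (inG_mul Gs1 (inP_G (Pn x y z))). Qed.
Lemma Gs2n x y z : inG (s2 *m nmx x y z).
Proof. exact: (inG_mul Gs2 (inP_G (Pn x y z))). Qed.

Lemma a_stab : stab (1%:M, s1, s1 *m nmx 1 0 0) =
  [set g | exists a y z : RR, a != 0 /\ g = mx3 a 0 y 0 a z 0 0 (a ^+ 2)^-1].
Proof.
apply/seteqP; split => g.
  case/(stab_iff _ _ _ Gs1 (Gs1n 1 0 0)) => Gg /inP_form2 [a [b [c [d [e [a0 d0 gE]]]]]] h2 h3; subst g.
  move: h2; crunch; case/inP_mx3; simp0 => e1 e2 e3 _.
  move: h3; crunch; case/inP_mx3; simp0 => f1 f2 f3 _.
  subst b; have da : d = a by lra.
  subst d; exists a, c, e; split => //; apply: mx3P => //; by rewrite expr2.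
move=> [a [y [z [a0 ->]]]]; apply/(stab_iff _ _ _ Gs1 (Gs1n 1 0 0)); split.
- by rewrite /inG det3; simp0; fld.
- by apply/inP_mx3; split => //; simp0; fld.
- pcheck.
- pcheck.
Qed.

Lemma orbit_sub_cell1 v w : Gorbit (1%:M, v, w) `<=` cell v w.
Proof. by have := orbit_sub_cell v w _ inP1; rewrite mulmx1. Qed.

Lemma ay_stab : stab (1%:M, s1, s1 *m nmx 0 0 0) =
  [set g | exists a b y z : RR, [/\ a != 0, b != 0 & g = mx3 a 0 y 0 b z 0 0 (a * b)^-1]].
Proof.
apply/seteqP; split => g.
  case/(stab_iff _ _ _ Gs1 (Gs1n 0 0 0)) => Gg /inP_form2 [a [b [c [d [e [a0 d0 gE]]]]]] h2 h3; subst g.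
  move: h2; crunch; case/inP_mx3; simp0 => e1 e2 e3 _.
  subst b; by exists a, d, c, e.
move=> [a [b [y [z [a0 b0 ->]]]]]; apply/(stab_iff _ _ _ Gs1 (Gs1n 0 0 0)); split.
- by rewrite /inG det3; simp0; fld.
- by apply/inP_mx3; split => //; simp0; fld.
- pcheck.
- pcheck.
Qed.

Lemma b_stab : stab (1%:M, s1, s2) =
  [set g | exists a b y : RR, [/\ a != 0, b != 0 & g = mx3 a 0 y 0 b 0 0 0 (a * b)^-1]].
Proof.
apply/seteqP; split => g.
  case/(stab_iff _ _ _ Gs1 Gs2) => Gg /inP_form2 [a [b [c [d [e [a0 d0 gE]]]]]] h2 h3; subst g.
  move: h2; crunch; case/inP_mx3; simp0 => e1 e2 e3 _.
  move: h3; crunch; case/inP_mx3; simp0 => f1 f2 f3 _.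
  subst b e; exists a, d, c; split => //.
move=> [a [b [y [a0 b0 ->]]]]; apply/(stab_iff _ _ _ Gs1 Gs2); split.
- by rewrite /inG det3; simp0; fld.
- by apply/inP_mx3; split => //; simp0; fld.
- pcheck.
- pcheck.
Qed.

Lemma c_stab : stab (1%:M, s1, 1%:M) =
  [set g | exists a b y z : RR, [/\ a != 0, b != 0 & g = mx3 a 0 y 0 b z 0 0 (a * b)^-1]].
Proof.
apply/seteqP; split => g.
  case/(stab_iff _ _ _ Gs1 G1) => Gg /inP_form2 [a [b [c [d [e [a0 d0 gE]]]]]] h2 h3; subst g.
  move: h2; crunch; case/inP_mx3; simp0 => e1 e2 e3 _.
  subst b; by exists a, d, c, e.
move=> [a [b [y [z [a0 b0 ->]]]]]; apply/(stab_iff _ _ _ Gs1 G1); split.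
- by rewrite /inG det3; simp0; fld.
- by apply/inP_mx3; split => //; simp0; fld.
- pcheck.
- pcheck.
Qed.

Lemma d_stab : stab (1%:M, s2, s2 *m nmx 0 0 1) =
  [set g | exists a x y : RR, a != 0 /\ g = mx3 (a ^+ 2)^-1 x y 0 a 0 0 0 a].
Proof.
apply/seteqP; split => g.
  case/(stab_iff _ _ _ Gs2 (Gs2n 0 0 1)) => Gg /inP_form2 [a [b [c [d [e [a0 d0 gE]]]]]] h2 h3; subst g.
  move: h2; crunch; case/inP_mx3; simp0 => e1 e2 e3 _.
  move: h3; crunch; case/inP_mx3; simp0 => f1 f2 f3 _.
  subst e; have hd : (a * d)^-1 = d by lra.
  have h1 : a * d ^+ 2 = 1.
    rewrite expr2 mulrA -[X in _ * X = _]hd mulfV // mulf_neq0 //.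
  exists d, b, c; split => //; apply: mx3P => //.
  by apply: (mulIf (expf_neq0 2 d0)); rewrite h1 mulVf // expf_neq0.
move=> [a [x [y [a0 ->]]]]; apply/(stab_iff _ _ _ Gs2 (Gs2n 0 0 1)); split.
- by rewrite /inG det3; simp0; fld.
- by apply/inP_mx3; split => //; simp0; fld.
- pcheck.
- pcheck.
Qed.

Lemma dy_stab : stab (1%:M, s2, s2 *m nmx 0 0 0) =
  [set g | exists a b x y : RR, [/\ a != 0, b != 0 & g = mx3 a x y 0 b 0 0 0 (a * b)^-1]].
Proof.
apply/seteqP; split => g.
  case/(stab_iff _ _ _ Gs2 (Gs2n 0 0 0)) => Gg /inP_form2 [a [b [c [d [e [a0 d0 gE]]]]]] h2 h3; subst g.
  move: h2; crunch; case/inP_mx3; simp0 => e1 e2 e3 _.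
  subst e; by exists a, d, b, c.
move=> [a [b [x [y [a0 b0 ->]]]]]; apply/(stab_iff _ _ _ Gs2 (Gs2n 0 0 0)); split.
- by rewrite /inG det3; simp0; fld.
- by apply/inP_mx3; split => //; simp0; fld.
- pcheck.
- pcheck.
Qed.

Lemma e_stab : stab (1%:M, s2, 1%:M) =
  [set g | exists a b x y : RR, [/\ a != 0, b != 0 & g = mx3 a x y 0 b 0 0 0 (a * b)^-1]].
Proof.
apply/seteqP; split => g.
  case/(stab_iff _ _ _ Gs2 G1) => Gg /inP_form2 [a [b [c [d [e [a0 d0 gE]]]]]] h2 h3; subst g.
  move: h2; crunch; case/inP_mx3; simp0 => e1 e2 e3 _.
  subst e; by exists a, d, b, c.
move=> [a [b [x [y [a0 b0 ->]]]]]; apply/(stab_iff _ _ _ Gs2 G1); split.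
- by rewrite /inG det3; simp0; fld.
- by apply/inP_mx3; split => //; simp0; fld.
- pcheck.
- pcheck.
Qed.

Lemma f_stab : stab (1%:M, 1%:M, 1%:M) = inP.
Proof.
apply/seteqP; split => g.
  by case/(stab_iff _ _ _ G1 G1).
move=> Pg; apply/(stab_iff _ _ _ G1 G1); rewrite invmx1 mulmx1 mul1mx; split => //.
exact: inP_G.
Qed.

Lemma cell_triv v w : inG v -> inG w ->
  (forall u, inP u -> inP (w *m u *m invmx w)) -> cell v w = Gorbit (1%:M, v, w).
Proof.
move=> Gv Gw Hw; apply/seteqP; split; last exact: orbit_sub_cell1.
apply (cell_sub v w _ Gv Gw); move=> u Pu; exists 1%:M, 1%:M; split.
- by rewrite mulmx1.
- exact: inP1.
- rewrite mulmx1 mulmxV; first exact: inP1. exact: (inG_unit Gv).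
- by rewrite !mulmx1; apply: Hw.
Qed.

Lemma b_cell : cell s1 s2 = Gorbit (1%:M, s1, s2).
Proof.
apply/seteqP; split; last exact: orbit_sub_cell1.
apply: cell_sub Gs1 Gs2 _ => u /inP_form2 [a [b [c [d [e [a0 d0 ->]]]]]].
exists 1%:M, (mx3 1 0 0 0 1 (-(e*(a*d))) 0 0 1); split; first by rewrite mulmx1.
- by apply/inP_mx3; split => //; simp0.
- pcheck.
- pcheck.
Qed.

Lemma c_cell : cell s1 1%:M = Gorbit (1%:M, s1, 1%:M).
Proof.
apply: cell_triv Gs1 G1 _ => u Pu.
by rewrite invmx1 mulmx1 mul1mx.
Qed.

Lemma e_cell : cell s2 1%:M = Gorbit (1%:M, s2, 1%:M).
Proof.
apply: cell_triv Gs2 G1 _ => u Pu.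
by rewrite invmx1 mulmx1 mul1mx.
Qed.

Lemma f_cell : cell 1%:M 1%:M = Gorbit (1%:M, 1%:M, 1%:M).
Proof.
apply: cell_triv G1 G1 _ => u Pu.
by rewrite invmx1 mulmx1 mul1mx.
Qed.

Lemma d_disj : Gorbit (1%:M, s2, s2 *m nmx 0 0 1) `&` Gorbit (1%:M, s2, s2 *m nmx 0 0 0) = set0.
Proof.
apply: orbit_disj => k Gk [h1 h2 h3]; move: h1 h2 h3; rewrite /xact /= => h1 h2 h3.
move: h1 => /(coset_iff _ G1); rewrite invmx1 mulmx1 mul1mx => /inP_form2 [a [b [c [d [e [a0 d0 kE]]]]]]; subst k.
move: h2 => /(coset_iff _ Gs2). crunch. case/inP_mx3; simp0 => e1 e2 e3 _.
move: h3 => /(coset_iff _ (inG_mul Gs2 (inP_G (Pn _ _ _)))). crunch. case/inP_mx3; simp0 => f1 f2 f3 _.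
by move: f3; rewrite e3 addr0 => /eqP; rewrite oppr_eq0 (negbTE d0).
Qed.

Lemma d_cell : cell s2 s2 = Gorbit (1%:M, s2, s2 *m nmx 0 0 1) `|` Gorbit (1%:M, s2, s2 *m nmx 0 0 0).
Proof.
apply/seteqP; split; last first.
  by move=> z [] Hz; apply: (orbit_sub_cell _ _ _ (Pn _ _ _) _ Hz).
apply: cell_sub Gs2 Gs2 _ => u /inP_form2 [a [b [c [d [e [a0 d0 ->]]]]]].
have [e0|e0] := eqVneq e 0.
  subst e; exists (nmx 0 0 0), 1%:M; split; first by move=> z Hz; right.
  - exact: inP1.
  - pcheck.
  - pcheck.
exists (nmx 0 0 1), (mx3 (-(e*(a*d)^-1)^-1) 0 0 0 ((a*d)^-1) 0 0 0 (-e)); split; first by move=> z Hz; left.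
- by apply/inP_mx3; split => //; fld.
- pcheck.
- pcheck.
Qed.


Lemma mexpE (A : M3) i j :
  mexp A i j = limn (fun N : nat => \sum_(k < N) (k`!%:R)^-1 * (A ^+ k) i j).
Proof.
rewrite /mexp mxE; congr (limn _); apply: funext => N.
by rewrite summxE; apply: eq_bigr => k _; rewrite mxE.
Qed.

Lemma mexp_nil (A : M3) : A *m A = 0 -> mexp A = 1%:M + A.
Proof.
move=> AA; apply/matrixP => i j; rewrite mexpE.
apply: cvg_lim; first exact: Rhausdorff.
apply: cvg_near_cst; near=> n.
have Hn : (2 <= n)%N by near: n; exists 2%N.
rewrite -(subnK Hn) addn2.
rewrite big_ord_recl big_ord_recl big1 ?addr0.
  by rewrite /= expr0 expr1 !mxE /= invr1 !mul1r.
move=> k _.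
have AA' : A * A = 0 by rewrite -mulmxE.
have -> : (lift ord0 (lift ord0 k) : nat) = k.+2 by [].
have -> : A ^+ k.+2 = 0 by rewrite !exprS mulrA AA' mul0r.
by rewrite mxE mulr0.
Unshelve. all: by end_near.
Qed.

Lemma pow_diag d1 d2 d3 k :
  (mx3 d1 0 0 0 d2 0 0 0 d3) ^+ k = mx3 (d1 ^+ k) 0 0 0 (d2 ^+ k) 0 0 0 (d3 ^+ k).
Proof.
elim: k => [|k IH]; first by rewrite !expr0 -one3.
by rewrite exprS IH -mulmxE mulmx3; apply: mx3P; rewrite ?exprS; ring.
Qed.

Lemma lim_expR (x : RR) : limn (fun N : nat => \sum_(k < N) (k`!%:R)^-1 * x ^+ k) = expR x.
Proof.
rewrite /expR; congr (limn _); apply: funext => N.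
rewrite /series /= big_mkord; apply: eq_bigr => k _.
by rewrite /exp_coeff /= mulrC.
Qed.

Lemma limn_cst (c : RR) : limn (fun _ : nat => c) = c.
Proof. by apply: cvg_lim; [exact: Rhausdorff | exact: cvg_cst]. Qed.

Lemma mexp_diag d1 d2 d3 :
  mexp (mx3 d1 0 0 0 d2 0 0 0 d3) = mx3 (expR d1) 0 0 0 (expR d2) 0 0 0 (expR d3).
Proof.
apply/matrixP => i j; rewrite mexpE.
under eq_fun do under eq_bigr do rewrite pow_diag.
rewrite mxE.
case: i => [[|[|[|i]]] Hi] //; case: j => [[|[|[|j]]] Hj] //=;
  under eq_fun do under eq_bigr do rewrite mxE /=;
  rewrite ?lim_expR //;
  under eq_fun do under eq_bigr do rewrite mulr0;
  under eq_fun do rewrite big1_eq; exact: limn_cst.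
Qed.

Definition approx (f : RR -> RR) (a b : RR) :=
  exists C, forall t : RR, `|t| <= 1 -> `|f t - a - b * t| <= C * t ^+ 2.

Definition msum (A : M3) : RR := \sum_i \sum_j `|A i j|.

Lemma msum_ge0 A : 0 <= msum A.
Proof. by apply: sumr_ge0 => i _; apply: sumr_ge0. Qed.

Lemma powA_bound (A : M3) k i j : `|(A ^+ k) i j| <= msum A ^+ k.
Proof.
elim: k i j => [|k IH] i j.
  by rewrite expr0 mxE; case: (i == j); rewrite ?normr1 ?normr0.
rewrite exprS -mulmxE mxE.
apply: le_trans (ler_norm_sum _ _ _) _.
apply: (@le_trans _ _ (\sum_l `|A i l| * msum A ^+ k)).
  by apply: ler_sum => l _; rewrite normrM ler_wpM2l.
rewrite -mulr_suml exprS ler_wpM2r ?exprn_ge0 ?msum_ge0 //.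
rewrite /msum [X in _ <= X](bigD1 i) //= lerDl; apply: sumr_ge0 => i' _; by apply: sumr_ge0.
Qed.

Lemma expR_partial (m : RR) n : 0 <= m -> series (exp_coeff m) n <= expR m.
Proof.
move=> m0; apply: nondecreasing_cvgn_le; last exact: is_cvg_series_exp_coeff.
by apply: nondecreasing_series => k _ _; apply: exp_coeff_ge0.
Qed.

Lemma near2 (P : nat -> Prop) : (forall n, P n.+2) -> \forall n \near \oo, P n.
Proof. by move=> H; exists 2%N => // n /= Hn; rewrite -(subnK Hn) addn2. Qed.

Lemma approx_mexp (A : M3) i j :
  approx (fun t => mexp (t *: A) i j) ((1%:M : M3) i j) (A i j).
Proof.
set m := msum A.
have m0 : 0 <= m := msum_ge0 A.
exists (expR m) => t t1.
set u := fun k : nat => (k`!%:R)^-1 * (t ^+ k * (A ^+ k) i j).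
have hS : (fun N : nat => \sum_(k < N) (k`!%:R)^-1 * ((t *: A) ^+ k) i j) = series u.
  apply: funext => N; rewrite /series /= big_mkord; apply: eq_bigr => k _.
  by rewrite /u exprZn mxE.
have hb : forall k, `|u k| <= `|t| ^+ k * exp_coeff m k.
  move=> k; rewrite /u /exp_coeff /= normrM normrM normrX.
  rewrite ger0_norm ?invr_ge0 ?ler0n //.
  apply: (@le_trans _ _ ((k`!%:R)^-1 * (`|t| ^+ k * m ^+ k))).
    by rewrite ler_wpM2l ?invr_ge0 ?ler0n // ler_wpM2l ?exprn_ge0 // powA_bound.
  by rewrite mulrCA [_^-1 * _]mulrC.
have cv : cvgn (series u).
  have := @normed_cvg RR RR^o u. move=> H. apply: H.
  apply: (@series_le_cvg _ _ (exp_coeff (`|t| * m))).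
  - by move=> k /=.
  - by move=> k; rewrite exp_coeff_ge0 // mulr_ge0.
  - move=> k /=; apply: le_trans (hb k) _; rewrite /exp_coeff /= exprMn mulrA //.
  - exact: is_cvg_series_exp_coeff.
have key : forall n, `|series u n.+2 - (1%:M : M3) i j - A i j * t| <= expR m * t ^+ 2.
  move=> n; rewrite /series /= big_mkord big_ord_recl big_ord_recl /=.
  have -> : u 0%N = (1%:M : M3) i j by rewrite /u !expr0 mul1r fact0 invr1 mul1r.
  have -> : u (bump 0 0) = A i j * t by rewrite /u /= !expr1 invr1 mul1r mulrC.
  set S := \sum_(_ < n) _.
  have -> : (1%:M : M3) i j + (A i j * t + S) - (1%:M : M3) i j - A i j * t = S by ring.
  apply: le_trans (ler_norm_sum _ _ _) _.
  apply: (@le_trans _ _ (\sum_(k < n) t ^+ 2 * exp_coeff m k.+2)).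
    apply: ler_sum => k _; apply: le_trans (hb _) _.
    have t2 : `|t| ^+ 2 = t ^+ 2 by rewrite real_normK ?num_real.
    have -> : bump 0 (bump 0 k) = k.+2 by rewrite /bump /= add1n add1n.
    rewrite ler_wpM2r ?exp_coeff_ge0 //.
    have -> : `|t| ^+ k.+2 = `|t| ^+ k * `|t| ^+ 2 by rewrite -exprD addn2.
    by rewrite -t2 ler_piMl ?exprn_ge0 // exprn_ile1.
  rewrite -mulr_sumr [X in _ <= X]mulrC ler_wpM2l ?sqr_ge0 //.
  apply: le_trans (expR_partial m n.+2 m0).
  rewrite /series /= big_mkord big_ord_recl big_ord_recl /= addrA lerDr.
  by rewrite addr_ge0 ?exp_coeff_ge0.
rewrite mexpE hS.
have Hup : limn (series u) <= (1%:M : M3) i j + A i j * t + expR m * t ^+ 2.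
  apply: limr_le cv _; apply: near2 => n.
  have := key n; rewrite ler_norml => /andP[_ h]; lra.
have Hlo : (1%:M : M3) i j + A i j * t - expR m * t ^+ 2 <= limn (series u).
  apply: limr_ge cv _; apply: near2 => n.
  have := key n; rewrite ler_norml => /andP[h _]; lra.
rewrite ler_norml; apply/andP; split; lra.
Qed.

Lemma approx_C f a b : approx f a b ->
  exists C, 0 <= C /\ forall t, `|t| <= 1 -> `|f t - a - b * t| <= C * t ^+ 2.
Proof.
move=> [C HC]; exists C; split => //.
have := HC 1; rewrite normr1 expr1n mulr1 => /(_ (lexx _)) h.
by rewrite mulr1 in h; exact: le_trans (normr_ge0 _) h.
Qed.

Lemma approx_lin0 f a b : approx f a b -> (forall t, f t = a) -> b = 0.
Proof.
move=> /approx_C [C [C0 HC]] fa.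
apply/eqP; apply: contraT => b0.
have bp : 0 < `|b| by rewrite normr_gt0.
set D := `|b| + C + 1.
have Dp : 0 < D by rewrite /D; lra.
set t := `|b| / D.
have tp : 0 < t by rewrite divr_gt0.
have tD : t * D = `|b| by rewrite /t mulfVK // gt_eqF.
have t1 : `|t| <= 1.
  rewrite ger0_norm; last exact: ltW tp.
  have h3 : t * (`|b| + C + 1) <= 1 * (`|b| + C + 1) by rewrite mul1r -/D tD /D; lra.
  by rewrite ler_pM2r in h3.
have := HC t t1; rewrite fa subrr sub0r normrN normrM (ger0_norm (ltW tp)).
move=> h.
have h2 : `|b| <= C * t by rewrite -(ler_pM2r tp) -mulrA -expr2.
have h3 : 0 < t * (`|b| + 1) by apply: mulr_gt0 => //; lra.
rewrite /D in tD; nra.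
Qed.

Lemma approx_sub f g a b c d : approx f a b -> approx g c d ->
  approx (fun t => f t - g t) (a - c) (b - d).
Proof.
move=> [C1 H1] [C2 H2]; exists (C1 + C2) => t t1.
have -> : f t - g t - (a - c) - (b - d) * t = (f t - a - b * t) - (g t - c - d * t) by ring.
apply: le_trans (ler_normB _ _) _; rewrite mulrDl; apply: lerD; [exact: H1|exact: H2].
Qed.

Lemma approx_mul f g a b c d : approx f a b -> approx g c d ->
  approx (fun t => f t * g t) (a * c) (a * d + b * c).
Proof.
move=> /approx_C [C1 [C10 H1]] /approx_C [C2 [C20 H2]].
exists (`|a| * C2 + `|b| * `|d| + `|b| * C2 + `|c| * C1 + `|d| * C1 + C1 * C2) => t t1.
have h1 := H1 t t1; have h2 := H2 t t1.
set r1 := f t - a - b * t in h1; set r2 := g t - c - d * t in h2.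
have T0 : 0 <= t ^+ 2 by rewrite sqr_ge0.
have T1 : t ^+ 2 <= 1 by rewrite -real_normK ?num_real // exprn_ile1.
have E : f t * g t - a * c - (a * d + b * c) * t =
   a * r2 + b * d * t ^+ 2 + b * t * r2 + r1 * c + r1 * d * t + r1 * r2.
  by rewrite /r1 /r2; ring.
rewrite E; clearbody r1 r2.
set T := t ^+ 2 in T0 T1 h1 h2 E *.
have n1 : 0 <= `|r1| by []. have n2 : 0 <= `|r2| by [].
have na : 0 <= `|a| by []. have nb : 0 <= `|b| by [].
have nc : 0 <= `|c| by []. have nd : 0 <= `|d| by [].
have nt : 0 <= `|t| by [].
apply: le_trans (ler_normD _ _) _.
rewrite !mulrDl; apply: lerD; last first.
  rewrite normrM; apply: le_trans (_ : _ <= C1 * T * (C2 * T)) _.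
    by apply: ler_pM.
  rewrite mulrACA ler_wpM2l ?mulr_ge0 //; exact: ler_piMl.
apply: le_trans (ler_normD _ _) _; apply: lerD; last first.
  rewrite !normrM; apply: le_trans (_ : _ <= `|r1| * `|d| * 1) _.
    by rewrite ler_wpM2l ?mulr_ge0.
  by rewrite mulr1 mulrC -mulrA ler_wpM2l.
apply: le_trans (ler_normD _ _) _; apply: lerD; last first.
  by rewrite !normrM mulrC -mulrA ler_wpM2l.
apply: le_trans (ler_normD _ _) _; apply: lerD; last first.
  rewrite !normrM -mulrA -[X in _ <= X]mulrA ler_wpM2l //.
  apply: le_trans h2; exact: ler_piMl.
apply: le_trans (ler_normD _ _) _; apply: lerD.
  by rewrite !normrM -mulrA ler_wpM2l.
by rewrite normrM normrM (ger0_norm T0).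
Qed.

Arguments approx_lin0 {f a b}.
Arguments approx_sub {f g a b c d}.
Arguments approx_mul {f g a b c d}.

Lemma lie_zero (A : M3) i j : i != j -> (forall t, mexp (t *: A) i j = 0) -> A i j = 0.
Proof.
move=> ij H; have := approx_mexp A i j; rewrite mxE (negbTE ij) /= => ap.
exact: (approx_lin0 ap).
Qed.

Lemma lie_eq (A : M3) i j : (forall t, mexp (t *: A) i i = mexp (t *: A) j j) -> A i i = A j j.
Proof.
move=> H; have := approx_sub (approx_mexp A i i) (approx_mexp A j j).
rewrite !mxE !eqxx subrr => ap.
by apply/eqP; rewrite -subr_eq0; apply/eqP; apply: (approx_lin0 ap) => t; rewrite H subrr.
Qed.

Lemma lie_tr (A : M3) :
  (forall t, mexp (t *: A) 0 0 * mexp (t *: A) 1 1 * mexp (t *: A) 2%:R 2%:R = 1) ->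
  A 0 0 + A 1 1 + A 2%:R 2%:R = 0.
Proof.
move=> H.
have := approx_mul (approx_mul (approx_mexp A 0 0) (approx_mexp A 1 1)) (approx_mexp A 2%:R 2%:R).
rewrite !mxE !eqxx /= !mulr1n !mul1r !mulr1 => ap.
have -> : A 0 0 + A 1 1 + A 2%:R 2%:R = A 2%:R 2%:R + (A 1 1 + A 0 0) by ring.
exact: (approx_lin0 ap).
Qed.

Lemma free_pivot n (X : n.-tuple M3) (pos : 'I_n -> 'I_3 * 'I_3) :
  (forall l m : 'I_n, X`_l (pos m).1 (pos m).2 = (l == m)%:R) -> free X.
Proof.
move=> H; apply/freeP => k Hk m.
have := congr1 (fun M : M3 => M (pos m).1 (pos m).2) Hk.
rewrite summxE (bigD1 m) //= big1 => [|l lm]; last by rewrite mxE H (negbTE lm) mulr0.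
by rewrite addr0 mxE H eqxx mulr1 mxE.
Qed.

Lemma has_dim_of (L : set M3) (B : seq M3) : free B -> (forall A, A \in B -> L A) ->
  (forall A, L A -> A \in <<B>>%VS) -> has_dim L (size B).
Proof.
move=> fB BL LB; split; first by exists B.
case=> s [Hs fs Ls].
have : (<<s>> <= <<B>>)%VS by apply/span_subvP => A /Ls /LB.
move/dimvS; rewrite (eqP fs) Hs => h.
by have := leq_trans h (dim_span B); rewrite ltnn.
Qed.

Lemma span3 (B1 B2 B3 : M3) c1 c2 c3 :
  c1 *: B1 + c2 *: B2 + c3 *: B3 \in <<[:: B1; B2; B3]>>%VS.
Proof.
by rewrite !rpredD // rpredZ // memv_span // !inE eqxx ?orbT.
Qed.


Lemma zero3 : (0 : M3) = mx3 0 0 0 0 0 0 0 0 0.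
Proof.
apply/matrixP => i j; rewrite !mxE.
by case: i => [[|[|[|i]]] Hi] //; case: j => [[|[|[|j]]] Hj] //=.
Qed.

Lemma mexp_tnil (t x y z : RR) : x * z = 0 ->
  mexp (t *: mx3 0 x y 0 0 z 0 0 0) = mx3 1 (t * x) (t * y) 0 1 (t * z) 0 0 1.
Proof.
move=> xz; rewrite mexp_nil.
  by rewrite one3 scale3 add3; apply: mx3P; ring.
rewrite scale3 mulmx3 zero3; apply: mx3P; try ring.
by rewrite !mulr0 !mul0r !addr0 !add0r mulrACA xz mulr0.
Qed.

Lemma mexp_tdiag (t d1 d2 d3 : RR) :
  mexp (t *: mx3 d1 0 0 0 d2 0 0 0 d3) = mx3 (expR (t * d1)) 0 0 0 (expR (t * d2)) 0 0 0 (expR (t * d3)).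
Proof. by rewrite scale3 !mulr0 mexp_diag. Qed.

Lemma expR_neq0 (x : RR) : expR x != 0.
Proof. by rewrite gt_eqF // expR_gt0. Qed.

Definition Sa := [set g : M3 | exists a y z : RR, a != 0 /\ g = mx3 a 0 y 0 a z 0 0 (a ^+ 2)^-1].

Lemma dim_a : has_dim (lie_alg Sa) 3.
Proof.
have -> : 3%N = size [:: mx3 1 0 0 0 1 0 0 0 (-2); mx3 0 0 1 0 0 0 0 0 0; mx3 0 0 0 0 0 1 0 0 0] by [].
apply: has_dim_of.
- apply: (free_pivot _ [tuple mx3 1 0 0 0 1 0 0 0 (-2); mx3 0 0 1 0 0 0 0 0 0; mx3 0 0 0 0 0 1 0 0 0]
     (fun m => nth (0,0) [:: (0,0); (0,2%:R); (1,2%:R)] m)).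
  by move=> [[|[|[|l]]] ?] [[|[|[|m]]] ?] //=; rewrite mxE.
- move=> A; rewrite !inE => /or3P [] /eqP -> t.
  + rewrite mexp_tdiag; exists (expR t), 0, 0; split; first exact: expR_neq0.
    apply: mx3P; rewrite ?mulr1 //.
    by rewrite (_ : t * -2 = - (t + t)); [rewrite exp.expRN exp.expRD expr2 | ring].
  + rewrite mexp_tnil ?mul0r //; exists 1, t, 0; split; first exact: oner_neq0.
    by apply: mx3P; rewrite ?mulr0 ?mulr1 ?expr1n ?invr1.
  + rewrite mexp_tnil ?mul0r //; exists 1, 0, t; split; first exact: oner_neq0.
    by apply: mx3P; rewrite ?mulr0 ?mulr1 ?expr1n ?invr1.
move=> A H.
have z01 : A 0 1 = 0 by apply: lie_zero => // t; have [a [y [z [_ ->]]]] := H t; rewrite mxE.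
have z10 : A 1 0 = 0 by apply: lie_zero => // t; have [a [y [z [_ ->]]]] := H t; rewrite mxE.
have z20 : A 2%:R 0 = 0 by apply: lie_zero => // t; have [a [y [z [_ ->]]]] := H t; rewrite mxE.
have z21 : A 2%:R 1 = 0 by apply: lie_zero => // t; have [a [y [z [_ ->]]]] := H t; rewrite mxE.
have e01 : A 0 0 = A 1 1 by apply: lie_eq => t; have [a [y [z [_ ->]]]] := H t; rewrite !mxE.
have tr : A 0 0 + A 1 1 + A 2%:R 2%:R = 0.
  apply: lie_tr => t; have [a [y [z [a0 ->]]]] := H t.
  by rewrite !mxE /= -expr2 mulfV // expf_neq0.
have -> : A = A 0 0 *: mx3 1 0 0 0 1 0 0 0 (-2) + A 0 2%:R *: mx3 0 0 1 0 0 0 0 0 0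
              + A 1 2%:R *: mx3 0 0 0 0 0 1 0 0 0.
  by rewrite {1}(mx3E A) !scale3 !add3; apply: mx3P; lra.
exact: span3.
Qed.

Lemma span4 (B1 B2 B3 B4 : M3) c1 c2 c3 c4 :
  c1 *: B1 + c2 *: B2 + c3 *: B3 + c4 *: B4 \in <<[:: B1; B2; B3; B4]>>%VS.
Proof. by rewrite !rpredD // rpredZ // memv_span // !inE eqxx ?orbT. Qed.

Lemma span5 (B1 B2 B3 B4 B5 : M3) c1 c2 c3 c4 c5 :
  c1 *: B1 + c2 *: B2 + c3 *: B3 + c4 *: B4 + c5 *: B5 \in <<[:: B1; B2; B3; B4; B5]>>%VS.
Proof. by rewrite !rpredD // rpredZ // memv_span // !inE eqxx ?orbT. Qed.

Ltac memt := apply: mx3P; rewrite ?mulr0 ?mulr1 ?mul1r ?mulrN1 ?exp.expR0 ?exp.expRN ?invr1 ?expr1n ?invr1 //.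

Definition Sb4 := [set g : M3 | exists a b y z : RR,
                      [/\ a != 0, b != 0 & g = mx3 a 0 y 0 b z 0 0 (a * b)^-1]].

Lemma dim_b4 : has_dim (lie_alg Sb4) 4.
Proof.
have -> : 4%N = size [:: mx3 1 0 0 0 0 0 0 0 (-1); mx3 0 0 0 0 1 0 0 0 (-1);
   mx3 0 0 1 0 0 0 0 0 0; mx3 0 0 0 0 0 1 0 0 0] by [].
apply: has_dim_of.
- apply: (free_pivot _ [tuple mx3 1 0 0 0 0 0 0 0 (-1); mx3 0 0 0 0 1 0 0 0 (-1);
   mx3 0 0 1 0 0 0 0 0 0; mx3 0 0 0 0 0 1 0 0 0]
     (fun m => nth (0,0) [:: (0,0); (1,1); (0,2%:R); (1,2%:R)] m)).
  by move=> [[|[|[|[|l]]]] ?] [[|[|[|[|m]]]] ?] //=; rewrite mxE.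
- move=> A; rewrite !inE => /or4P [] /eqP -> t.
  + rewrite mexp_tdiag; exists (expR t), 1, 0, 0; split; [exact: expR_neq0|exact: oner_neq0|memt].
  + rewrite mexp_tdiag; exists 1, (expR t), 0, 0; split; [exact: oner_neq0|exact: expR_neq0|memt].
  + rewrite mexp_tnil ?mul0r //; exists 1, 1, t, 0; split; [exact: oner_neq0|exact: oner_neq0|memt].
  + rewrite mexp_tnil ?mul0r //; exists 1, 1, 0, t; split; [exact: oner_neq0|exact: oner_neq0|memt].
move=> A H.
have z01 : A 0 1 = 0 by apply: lie_zero => // t; have [a [b [y [z [_ _ ->]]]]] := H t; rewrite mxE.
have z10 : A 1 0 = 0 by apply: lie_zero => // t; have [a [b [y [z [_ _ ->]]]]] := H t; rewrite mxE.
have z20 : A 2%:R 0 = 0 by apply: lie_zero => // t; have [a [b [y [z [_ _ ->]]]]] := H t; rewrite mxE.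
have z21 : A 2%:R 1 = 0 by apply: lie_zero => // t; have [a [b [y [z [_ _ ->]]]]] := H t; rewrite mxE.
have tr : A 0 0 + A 1 1 + A 2%:R 2%:R = 0.
  apply: lie_tr => t; have [a [b [y [z [a0 b0 ->]]]]] := H t.
  by rewrite !mxE /= mulfV // mulf_neq0.
have -> : A = A 0 0 *: mx3 1 0 0 0 0 0 0 0 (-1) + A 1 1 *: mx3 0 0 0 0 1 0 0 0 (-1)
              + A 0 2%:R *: mx3 0 0 1 0 0 0 0 0 0 + A 1 2%:R *: mx3 0 0 0 0 0 1 0 0 0.
  by rewrite {1}(mx3E A) !scale3 !add3; apply: mx3P; lra.
exact: span4.
Qed.

Definition Sb3 := [set g : M3 | exists a b y : RR,
                      [/\ a != 0, b != 0 & g = mx3 a 0 y 0 b 0 0 0 (a * b)^-1]].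

Lemma dim_b3 : has_dim (lie_alg Sb3) 3.
Proof.
have -> : 3%N = size [:: mx3 1 0 0 0 0 0 0 0 (-1); mx3 0 0 0 0 1 0 0 0 (-1);
   mx3 0 0 1 0 0 0 0 0 0] by [].
apply: has_dim_of.
- apply: (free_pivot _ [tuple mx3 1 0 0 0 0 0 0 0 (-1); mx3 0 0 0 0 1 0 0 0 (-1);
   mx3 0 0 1 0 0 0 0 0 0]
     (fun m => nth (0,0) [:: (0,0); (1,1); (0,2%:R)] m)).
  by move=> [[|[|[|l]]] ?] [[|[|[|m]]] ?] //=; rewrite mxE.
- move=> A; rewrite !inE => /or3P [] /eqP -> t.
  + rewrite mexp_tdiag; exists (expR t), 1, 0; split; [exact: expR_neq0|exact: oner_neq0|memt].
  + rewrite mexp_tdiag; exists 1, (expR t), 0; split; [exact: oner_neq0|exact: expR_neq0|memt].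
  + rewrite mexp_tnil ?mul0r //; exists 1, 1, t; split; [exact: oner_neq0|exact: oner_neq0|memt].
move=> A H.
have z01 : A 0 1 = 0 by apply: lie_zero => // t; have [a [b [y [_ _ ->]]]] := H t; rewrite mxE.
have z10 : A 1 0 = 0 by apply: lie_zero => // t; have [a [b [y [_ _ ->]]]] := H t; rewrite mxE.
have z12 : A 1 2%:R = 0 by apply: lie_zero => // t; have [a [b [y [_ _ ->]]]] := H t; rewrite mxE.
have z20 : A 2%:R 0 = 0 by apply: lie_zero => // t; have [a [b [y [_ _ ->]]]] := H t; rewrite mxE.
have z21 : A 2%:R 1 = 0 by apply: lie_zero => // t; have [a [b [y [_ _ ->]]]] := H t; rewrite mxE.
have tr : A 0 0 + A 1 1 + A 2%:R 2%:R = 0.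
  apply: lie_tr => t; have [a [b [y [a0 b0 ->]]]] := H t.
  by rewrite !mxE /= mulfV // mulf_neq0.
have -> : A = A 0 0 *: mx3 1 0 0 0 0 0 0 0 (-1) + A 1 1 *: mx3 0 0 0 0 1 0 0 0 (-1)
              + A 0 2%:R *: mx3 0 0 1 0 0 0 0 0 0.
  by rewrite {1}(mx3E A) !scale3 !add3; apply: mx3P; lra.
exact: span3.
Qed.

Definition Sd := [set g : M3 | exists a x y : RR, a != 0 /\ g = mx3 (a ^+ 2)^-1 x y 0 a 0 0 0 a].

Lemma dim_d : has_dim (lie_alg Sd) 3.
Proof.
have -> : 3%N = size [:: mx3 (-2) 0 0 0 1 0 0 0 1; mx3 0 1 0 0 0 0 0 0 0;
   mx3 0 0 1 0 0 0 0 0 0] by [].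
apply: has_dim_of.
- apply: (free_pivot _ [tuple mx3 (-2) 0 0 0 1 0 0 0 1; mx3 0 1 0 0 0 0 0 0 0;
   mx3 0 0 1 0 0 0 0 0 0]
     (fun m => nth (0,0) [:: (1,1); (0,1); (0,2%:R)] m)).
  by move=> [[|[|[|l]]] ?] [[|[|[|m]]] ?] //=; rewrite mxE.
- move=> A; rewrite !inE => /or3P [] /eqP -> t.
  + rewrite mexp_tdiag; exists (expR t), 0, 0; split; first exact: expR_neq0.
    apply: mx3P; rewrite ?mulr1 //.
    by rewrite (_ : t * -2 = - (t + t)); [rewrite exp.expRN exp.expRD expr2 | ring].
  + rewrite mexp_tnil ?mulr0 //; exists 1, t, 0; split; [exact: oner_neq0|memt].
  + rewrite mexp_tnil ?mul0r //; exists 1, 0, t; split; [exact: oner_neq0|memt].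
move=> A H.
have z10 : A 1 0 = 0 by apply: lie_zero => // t; have [a [x [y [_ ->]]]] := H t; rewrite mxE.
have z12 : A 1 2%:R = 0 by apply: lie_zero => // t; have [a [x [y [_ ->]]]] := H t; rewrite mxE.
have z20 : A 2%:R 0 = 0 by apply: lie_zero => // t; have [a [x [y [_ ->]]]] := H t; rewrite mxE.
have z21 : A 2%:R 1 = 0 by apply: lie_zero => // t; have [a [x [y [_ ->]]]] := H t; rewrite mxE.
have e12 : A 1 1 = A 2%:R 2%:R by apply: lie_eq => t; have [a [x [y [_ ->]]]] := H t; rewrite !mxE.
have tr : A 0 0 + A 1 1 + A 2%:R 2%:R = 0.
  apply: lie_tr => t; have [a [x [y [a0 ->]]]] := H t.
  by rewrite !mxE /= -mulrA -expr2 mulVf // expf_neq0.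
have -> : A = A 1 1 *: mx3 (-2) 0 0 0 1 0 0 0 1 + A 0 1 *: mx3 0 1 0 0 0 0 0 0 0
              + A 0 2%:R *: mx3 0 0 1 0 0 0 0 0 0.
  by rewrite {1}(mx3E A) !scale3 !add3; apply: mx3P; lra.
exact: span3.
Qed.

Definition Se := [set g : M3 | exists a b x y : RR,
                      [/\ a != 0, b != 0 & g = mx3 a x y 0 b 0 0 0 (a * b)^-1]].

Lemma dim_e : has_dim (lie_alg Se) 4.
Proof.
have -> : 4%N = size [:: mx3 1 0 0 0 0 0 0 0 (-1); mx3 0 0 0 0 1 0 0 0 (-1);
   mx3 0 1 0 0 0 0 0 0 0; mx3 0 0 1 0 0 0 0 0 0] by [].
apply: has_dim_of.
- apply: (free_pivot _ [tuple mx3 1 0 0 0 0 0 0 0 (-1); mx3 0 0 0 0 1 0 0 0 (-1);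
   mx3 0 1 0 0 0 0 0 0 0; mx3 0 0 1 0 0 0 0 0 0]
     (fun m => nth (0,0) [:: (0,0); (1,1); (0,1); (0,2%:R)] m)).
  by move=> [[|[|[|[|l]]]] ?] [[|[|[|[|m]]]] ?] //=; rewrite mxE.
- move=> A; rewrite !inE => /or4P [] /eqP -> t.
  + rewrite mexp_tdiag; exists (expR t), 1, 0, 0; split; [exact: expR_neq0|exact: oner_neq0|memt].
  + rewrite mexp_tdiag; exists 1, (expR t), 0, 0; split; [exact: oner_neq0|exact: expR_neq0|memt].
  + rewrite mexp_tnil ?mulr0 //; exists 1, 1, t, 0; split; [exact: oner_neq0|exact: oner_neq0|memt].
  + rewrite mexp_tnil ?mul0r //; exists 1, 1, 0, t; split; [exact: oner_neq0|exact: oner_neq0|memt].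
move=> A H.
have z10 : A 1 0 = 0 by apply: lie_zero => // t; have [a [b [y [z [_ _ ->]]]]] := H t; rewrite mxE.
have z12 : A 1 2%:R = 0 by apply: lie_zero => // t; have [a [b [y [z [_ _ ->]]]]] := H t; rewrite mxE.
have z20 : A 2%:R 0 = 0 by apply: lie_zero => // t; have [a [b [y [z [_ _ ->]]]]] := H t; rewrite mxE.
have z21 : A 2%:R 1 = 0 by apply: lie_zero => // t; have [a [b [y [z [_ _ ->]]]]] := H t; rewrite mxE.
have tr : A 0 0 + A 1 1 + A 2%:R 2%:R = 0.
  apply: lie_tr => t; have [a [b [y [z [a0 b0 ->]]]]] := H t.
  by rewrite !mxE /= mulfV // mulf_neq0.
have -> : A = A 0 0 *: mx3 1 0 0 0 0 0 0 0 (-1) + A 1 1 *: mx3 0 0 0 0 1 0 0 0 (-1)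
              + A 0 1 *: mx3 0 1 0 0 0 0 0 0 0 + A 0 2%:R *: mx3 0 0 1 0 0 0 0 0 0.
  by rewrite {1}(mx3E A) !scale3 !add3; apply: mx3P; lra.
exact: span4.
Qed.

Lemma inP_diag (g : M3) : inP g -> g 0 0 * g 1 1 * g 2%:R 2%:R = 1.
Proof. by rewrite {1}(mx3E g) => /inP_mx3 []. Qed.

Lemma dim_f : has_dim (lie_alg inP) 5.
Proof.
have -> : 5%N = size [:: mx3 1 0 0 0 0 0 0 0 (-1); mx3 0 0 0 0 1 0 0 0 (-1);
   mx3 0 1 0 0 0 0 0 0 0; mx3 0 0 1 0 0 0 0 0 0; mx3 0 0 0 0 0 1 0 0 0] by [].
apply: has_dim_of.
- apply: (free_pivot _ [tuple mx3 1 0 0 0 0 0 0 0 (-1); mx3 0 0 0 0 1 0 0 0 (-1);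
   mx3 0 1 0 0 0 0 0 0 0; mx3 0 0 1 0 0 0 0 0 0; mx3 0 0 0 0 0 1 0 0 0]
     (fun m => nth (0,0) [:: (0,0); (1,1); (0,1); (0,2%:R); (1,2%:R)] m)).
  by move=> [[|[|[|[|[|l]]]]] ?] [[|[|[|[|[|m]]]]] ?] //=; rewrite mxE.
- move=> A; rewrite !inE => /orP [/eqP -> t|/or4P [] /eqP -> t].
  + rewrite mexp_tdiag; apply/inP_mx3; split => //.
    by rewrite mulr0 mulrN1 exp.expR0 mulr1 mulr1 exp.expRN mulfV // expR_neq0.
  + rewrite mexp_tdiag; apply/inP_mx3; split => //.
    by rewrite mulr0 mulrN1 exp.expR0 mulr1 mul1r exp.expRN mulfV // expR_neq0.
  + by rewrite mexp_tnil ?mulr0 //; apply/inP_mx3; split => //; rewrite !mulr1.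
  + by rewrite mexp_tnil ?mul0r //; apply/inP_mx3; split => //; rewrite !mulr1.
  + by rewrite mexp_tnil ?mul0r //; apply/inP_mx3; split => //; rewrite !mulr1.
move=> A H.
have z10 : A 1 0 = 0 by apply: lie_zero => // t; exact: (H t).2 1 0 isT.
have z20 : A 2%:R 0 = 0 by apply: lie_zero => // t; exact: (H t).2 2%:R 0 isT.
have z21 : A 2%:R 1 = 0 by apply: lie_zero => // t; exact: (H t).2 2%:R 1 isT.
have tr : A 0 0 + A 1 1 + A 2%:R 2%:R = 0.
  by apply: lie_tr => t; apply: inP_diag.
have -> : A = A 0 0 *: mx3 1 0 0 0 0 0 0 0 (-1) + A 1 1 *: mx3 0 0 0 0 1 0 0 0 (-1)
              + A 0 1 *: mx3 0 1 0 0 0 0 0 0 0 + A 0 2%:R *: mx3 0 0 1 0 0 0 0 0 0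
              + A 1 2%:R *: mx3 0 0 0 0 0 1 0 0 0.
  by rewrite {1}(mx3E A) !scale3 !add3; apply: mx3P; lra.
exact: span5.
Qed.

Theorem mainTheorem11 :
  let x_s1s1 := (1%:M, s1, s1 *m nmx 1 0 0) : triple in
  let y_s1s1 := (1%:M, s1, s1 *m nmx 0 0 0) : triple in
  let x_s2s2 := (1%:M, s2, s2 *m nmx 0 0 1) : triple in
  let y_s2s2 := (1%:M, s2, s2 *m nmx 0 0 0) : triple in
  let x_s1s2 := (1%:M, s1, s2) : triple in
  let x_s11 := (1%:M, s1, 1%:M) : triple in
  let x_s21 := (1%:M, s2, 1%:M) : triple in
  let x_11 := (1%:M, 1%:M, 1%:M) : triple in
  (* (a) *)
  [/\ cell s1 s1 = Gorbit x_s1s1 `|` Gorbit y_s1s1,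
      Gorbit x_s1s1 `&` Gorbit y_s1s1 = set0,
      orbit_dim x_s1s1 5,
      stab x_s1s1 = [set g | exists a y z : RR, a != 0 /\ g = mx3 a 0 y 0 a z 0 0 (a ^+ 2)^-1] &
      orbit_dim y_s1s1 4 /\
      stab y_s1s1 = [set g | exists a b y z : RR,
                      [/\ a != 0, b != 0 & g = mx3 a 0 y 0 b z 0 0 (a * b)^-1]]] /\
  (* (b) *)
  [/\ cell s1 s2 = Gorbit x_s1s2,
      orbit_dim x_s1s2 5 &
      stab x_s1s2 = [set g | exists a b y : RR,
                      [/\ a != 0, b != 0 & g = mx3 a 0 y 0 b 0 0 0 (a * b)^-1]]] /\
  (* (c) *)
  [/\ cell s1 1%:M = Gorbit x_s11,
      orbit_dim x_s11 4 &
      stab x_s11 = [set g | exists a b y z : RR,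
                      [/\ a != 0, b != 0 & g = mx3 a 0 y 0 b z 0 0 (a * b)^-1]]] /\
  (* (d) *)
  [/\ cell s2 s2 = Gorbit x_s2s2 `|` Gorbit y_s2s2,
      Gorbit x_s2s2 `&` Gorbit y_s2s2 = set0,
      orbit_dim x_s2s2 5,
      stab x_s2s2 = [set g | exists a x y : RR, a != 0 /\ g = mx3 (a ^+ 2)^-1 x y 0 a 0 0 0 a] &
      orbit_dim y_s2s2 4 /\
      stab y_s2s2 = [set g | exists a b x y : RR,
                      [/\ a != 0, b != 0 & g = mx3 a x y 0 b 0 0 0 (a * b)^-1]]] /\
  (* (e) *)
  [/\ cell s2 1%:M = Gorbit x_s21,
      orbit_dim x_s21 4 &
      stab x_s21 = [set g | exists a b x y : RR,
                      [/\ a != 0, b != 0 & g = mx3 a x y 0 b 0 0 0 (a * b)^-1]]] /\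
  (* (f) *)
  [/\ cell 1%:M 1%:M = Gorbit x_11,
      orbit_dim x_11 3 &
      stab x_11 = inP].

Proof.
cbv zeta.
split; [|split; [|split; [|split; [|split]]]].
- split.
  + exact: a_cell.
  + exact: a_disj.
  + by split => //; rewrite a_stab; exact: dim_a.
  + exact: a_stab.
  + split; last exact: ay_stab.
    by split => //; rewrite ay_stab; exact: dim_b4.
- split.
  + exact: b_cell.
  + by split => //; rewrite b_stab; exact: dim_b3.
  + exact: b_stab.
- split.
  + exact: c_cell.
  + by split => //; rewrite c_stab; exact: dim_b4.
  + exact: c_stab.
- split.
  + exact: d_cell.
  + exact: d_disj.
  + by split => //; rewrite d_stab; exact: dim_d.
  + exact: d_stab.
  + split; last exact: dy_stab.
    by split => //; rewrite dy_stab; exact: dim_e.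
- split.
  + exact: e_cell.
  + by split => //; rewrite e_stab; exact: dim_e.
  + exact: e_stab.
- split.
  + exact: f_cell.
  + by split => //; rewrite f_stab; exact: dim_f.
  + exact: f_stab.
Qed.
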